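(* Let $A\in\mathbb{T}^{m\times n}$, $B\in\mathbb{T}^{m\times q}$ and let $P\in\mathbb{R}^{q\times n}$ be a row-stochastic matrix (nonnegative entries, each row summing to $1$). Assume every row of $B$ has at least one finite entry, every column of $A$ has at least one finite entry, and every row of $A$ has at least one finite entry. Let $F=A^\sharp\circ B\circ P$ (a self-map of $\mathbb{T}^n$) and $F^\ast=(B^\top)^\sharp\circ P\circ A^\top$ (a self-map of $\mathbb{T}^m$), i.e. $F(x)=A^\sharp(B\odot(Px))$ and $F^\ast(y)=(B^\top)^\sharp(P(A^\top\odot y))$. Then \[ \overline{\mathrm{cw}}(F^\ast) = -\,\underline{\mathrm{cw}}(F). \]
   Context: $\mathbb{T}=\mathbb{R}\cup\{-\infty\}$ with tropical operations $a\oplus b=\max(a,b)$, $a\odot b=a+b$. For a matrix $C\in\mathbb{T}^{r\times s}$ and $z\in\mathbb{T}^s$, $(C\odot z)_i=\max_k (C_{ik}+z_k)$. For $C\in\mathbb{T}^{r\times s}$, the adjoint $C^\sharp$ maps $y\in(\mathbb{R}\cup\{\pm\infty\})^r$ to the vector with entries $C^\sharp(y)_j=\min_i(-C_{ij}+y_i)$, with the convention $(+\infty)+(-\infty)=(-\infty)+(+\infty)=+\infty$. $C^\top$ is the transpose. For a real matrix $P$ and $z\in\mathbb{T}^s$, $Pz$ is the usual matrix–vector product with the convention $0\cdot(-\infty)=0$. $\mathbb{T}^n$ is ordered entrywise; for $\lambda\in\mathbb{R}$, $\lambda+z$ is entrywise addition. For a self-map $G$ of $\mathbb{T}^d$: $\overline{\mathrm{cw}}(G)=\inf\{\mu\in\mathbb{R}: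 \exists z\in\mathbb{R}^d,\ G(z)\le\mu+z\}$ and $\underline{\mathrm{cw}}(G)=\sup\{\mu\in\mathbb{R}: \exists z\in\mathbb{R}^d,\ G(z)\ge\mu+z\}$. *)

(* Defs.v *)
From Stdlib Require Import Reals Lra ClassicalEpsilon.
Open Scope R_scope.

Inductive ER : Type := Fin (r : R) | PInf | NInf.

(** Tropical numbers T = R ∪ {-∞}; [None] is -∞. *)
Definition trop := option R.

Definition trop_to_ER (a : trop) : ER :=
  match a with Some r => Fin r | None => NInf end.

Definition ER_le (x y : ER) : Prop :=
  match x, y with
  | NInf, _ => True
  | _, PInf => True
  | Fin a, Fin b => a <= b
  | _, _ => False
  end.

Definition ER_opp (x : ER) : ER :=
  match x with Fin a => Fin (- a) | PInf => NInf | NInf => PInf end.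

(** Addition with (-∞) absorbing (used for tropical products). *)
Definition ER_add_low (x y : ER) : ER :=
  match x, y with
  | NInf, _ | _, NInf => NInf
  | PInf, _ | _, PInf => PInf
  | Fin a, Fin b => Fin (a + b)
  end.

(** Addition with (+∞)+(-∞) = (-∞)+(+∞) = +∞ (used for the adjoint). *)
Definition ER_add_up (x y : ER) : ER :=
  match x, y with
  | PInf, _ | _, PInf => PInf
  | NInf, _ | _, NInf => NInf
  | Fin a, Fin b => Fin (a + b)
  end.

Definition ER_max (x y : ER) : ER :=
  match x, y with
  | PInf, _ | _, PInf => PInf
  | NInf, z | z, NInf => z
  | Fin a, Fin b => Fin (Rmax a b)
  end.

Definition ER_min (x y : ER) : ER :=
  match x, y with
  | NInf, _ | _, NInf => NInf
  | PInf, z | z, PInf => z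
  | Fin a, Fin b => Fin (Rmin a b)
  end.

Fixpoint ER_bigmax (k : nat) (f : nat -> ER) : ER :=
  match k with O => NInf | S k' => ER_max (ER_bigmax k' f) (f k') end.
Fixpoint ER_bigmin (k : nat) (f : nat -> ER) : ER :=
  match k with O => PInf | S k' => ER_min (ER_bigmin k' f) (f k') end.
Fixpoint ER_bigsum (k : nat) (f : nat -> ER) : ER :=
  match k with O => Fin 0 | S k' => ER_add_low (ER_bigsum k' f) (f k') end.
Fixpoint Rbigsum (k : nat) (f : nat -> R) : R :=
  match k with O => 0 | S k' => Rbigsum k' f + f k' end.

(** Scalar multiplication of a real by an extended real, with 0·(±∞) = 0. *)
Definition ER_scal (p : R) (x : ER) : ER :=
  match x with
  | Fin a => Fin (p * a)
  | PInf => if Req_EM_T p 0 then Fin 0 else if Rlt_dec 0 p then PInf else NInf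
  | NInf => if Req_EM_T p 0 then Fin 0 else if Rlt_dec 0 p then NInf else PInf
  end.

(** Matrices are functions of row and column indices; vectors are functions
    of an index; only indices below the dimensions are ever used. *)
Definition tmat := nat -> nat -> trop.
Definition vec := nat -> ER.

Definition tmul (s : nat) (C : tmat) (z : vec) : vec :=
  fun i => ER_bigmax s (fun k => ER_add_low (trop_to_ER (C i k)) (z k)).

Definition tadj (r : nat) (C : tmat) (y : vec) : vec :=
  fun j => ER_bigmin r (fun i => ER_add_up (ER_opp (trop_to_ER (C i j))) (y i)).

Definition ttr (C : tmat) : tmat := fun i j => C j i.

Definition rmul (s : nat) (P : nat -> nat -> R) (z : vec) : vec :=
  fun i => ER_bigsum s (fun k => ER_scal (P i k) (z k)).

Definition row_stochastic (q n : nat) (P : nat -> nat -> R) : Prop :=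
  (forall i k, (i < q)%nat -> (k < n)%nat -> 0 <= P i k) /\
  (forall i, (i < q)%nat -> Rbigsum n (fun k => P i k) = 1).

Definition ER_sup (S : R -> Prop) : ER :=
  match excluded_middle_informative (exists x, S x) with
  | left ne =>
      match excluded_middle_informative (bound S) with
      | left b => Fin (proj1_sig (completeness S b ne))
      | right _ => PInf
      end
  | right _ => NInf
  end.

Definition ER_inf (S : R -> Prop) : ER :=
  ER_opp (ER_sup (fun x => S (- x))).

Definition cw_upper (d : nat) (G : vec -> vec) : ER :=
  ER_inf (fun mu => exists z : nat -> R,
    forall i, (i < d)%nat -> ER_le (G (fun k => Fin (z k)) i) (Fin (mu + z i))).

Definition cw_lower (d : nat) (G : vec -> vec) : ER :=
  ER_sup (fun mu => exists z : nat -> R,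
    forall i, (i < d)%nat -> ER_le (Fin (mu + z i)) (G (fun k => Fin (z k)) i)).

(* Main.v *)
Require Import Defs.
From Stdlib Require Import Reals Lra Lia FunctionalExtensionality PropExtensionality.
Open Scope R_scope.

Lemma max_le a b x : ER_le (ER_max a b) x <-> ER_le a x /\ ER_le b x.
Proof. destruct a, b, x; simpl; try tauto; unfold Rmax; destruct Rle_dec; split; intros; try split; try lra; intuition lra. Qed.
Lemma le_max t a b : ER_le (Fin t) (ER_max a b) <-> ER_le (Fin t) a \/ ER_le (Fin t) b.
Proof. destruct a, b; simpl; try tauto; unfold Rmax; destruct Rle_dec; split; intros; try lra; intuition lra. Qed.
Lemma le_min x a b : ER_le x (ER_min a b) <-> ER_le x a /\ ER_le x b.
Proof. destruct a, b, x; simpl; try tauto; unfold Rmin; destruct Rle_dec; split; intros; try split; try lra; intuition lra. Qed.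
Lemma min_le t a b : ER_le (ER_min a b) (Fin t) <-> ER_le a (Fin t) \/ ER_le b (Fin t).
Proof. destruct a, b; simpl; try tauto; unfold Rmin; destruct Rle_dec; split; intros; try lra; intuition lra. Qed.

Lemma bigmax_le k f x : ER_le (ER_bigmax k f) x <-> forall i, (i < k)%nat -> ER_le (f i) x.
Proof.
  induction k; cbn [ER_bigmax ER_bigmin].
  - destruct x; simpl; split; intros; auto; lia.
  - rewrite max_le, IHk. split.
    + intros [H1 H2] i Hi. destruct (Nat.eq_dec i k); [subst; auto| apply H1; lia].
    + intros H; split; auto.
Qed.
Lemma le_bigmax k f t : ER_le (Fin t) (ER_bigmax k f) <-> exists i, (i < k)%nat /\ ER_le (Fin t) (f i).
Proof.
  induction k; cbn [ER_bigmax ER_bigmin].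
  - split; [simpl; tauto| intros [i [Hi _]]; lia].
  - rewrite le_max, IHk. split.
    + intros [[i [Hi H]]|H]; [exists i; split; auto|exists k; split; auto].
    + intros [i [Hi H]]. destruct (Nat.eq_dec i k); [subst; auto| left; exists i; split; auto; lia].
Qed.
Lemma le_bigmin k f x : ER_le x (ER_bigmin k f) <-> forall i, (i < k)%nat -> ER_le x (f i).
Proof.
  induction k; cbn [ER_bigmax ER_bigmin].
  - destruct x; simpl; split; intros; auto; lia.
  - rewrite le_min, IHk. split.
    + intros [H1 H2] i Hi. destruct (Nat.eq_dec i k); [subst; auto| apply H1; lia].
    + intros H; split; auto.
Qed.
Lemma bigmin_le k f t : ER_le (ER_bigmin k f) (Fin t) <-> exists i, (i < k)%nat /\ ER_le (f i) (Fin t).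
Proof.
  induction k; cbn [ER_bigmax ER_bigmin].
  - split; [simpl; tauto| intros [i [Hi _]]; lia].
  - rewrite min_le, IHk. split.
    + intros [[i [Hi H]]|H]; [exists i; split; auto|exists k; split; auto].
    + intros [i [Hi H]]. destruct (Nat.eq_dec i k); [subst; auto| left; exists i; split; auto; lia].
Qed.

Lemma bigmax_notP k f : (forall i, (i < k)%nat -> f i <> PInf) -> ER_bigmax k f <> PInf.
Proof.
  induction k; simpl; intros H. discriminate.
  assert (H1 : ER_bigmax k f <> PInf) by (apply IHk; intros; apply H; lia).
  assert (H2 : f k <> PInf) by (apply H; lia).
  destruct (ER_bigmax k f), (f k); simpl; congruence.
Qed.
Lemma bigmin_notN k f : (forall i, (i < k)%nat -> f i <> NInf) -> ER_bigmin k f <> NInf.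
Proof.
  induction k; simpl; intros H. discriminate.
  assert (H1 : ER_bigmin k f <> NInf) by (apply IHk; intros; apply H; lia).
  assert (H2 : f k <> NInf) by (apply H; lia).
  destruct (ER_bigmin k f), (f k); simpl; congruence.
Qed.

Definition fin (x : ER) : R := match x with Fin r => r | _ => 0 end.
Lemma fin_of_lo t x : x <> PInf -> ER_le (Fin t) x -> x = Fin (fin x).
Proof. destruct x; simpl; tauto. Qed.
Lemma fin_of_up t x : x <> NInf -> ER_le x (Fin t) -> x = Fin (fin x).
Proof. destruct x; simpl; tauto. Qed.

Lemma rmul_fin n P x xr k : (forall l, (l < n)%nat -> x l = Fin (xr l)) ->
  rmul n P x k = Fin (Rbigsum n (fun l => P k l * xr l)).
Proof.
  unfold rmul. induction n; simpl; intros H. reflexivity.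
  rewrite IHn by (intros; apply H; lia). rewrite (H n) by lia. reflexivity.
Qed.

Lemma Rbigsum_le n f g : (forall l, (l < n)%nat -> f l <= g l) -> Rbigsum n f <= Rbigsum n g.
Proof. induction n; simpl; intros H. lra. assert (f n <= g n) by (apply H; lia).
  assert (Rbigsum n f <= Rbigsum n g) by (apply IHn; intros; apply H; lia). lra. Qed.
Lemma Rbigsum_aff n (p z : nat -> R) c : Rbigsum n (fun l => p l * (c - z l)) = c * Rbigsum n p - Rbigsum n (fun l => p l * z l).
Proof. induction n; simpl. ring. rewrite IHn. ring. Qed.
Lemma Rbigsum_opp n (p z : nat -> R) : Rbigsum n (fun l => p l * - z l) = - Rbigsum n (fun l => p l * z l).
Proof. induction n; simpl. ring. rewrite IHn. ring. Qed.

Theorem mainTheorem2 (m n q : nat) (A B : tmat) (P : nat -> nat -> R)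
  (hP : row_stochastic q n P)
  (hB : forall i, (i < m)%nat -> exists k, (k < q)%nat /\ B i k <> None)
  (hAcol : forall j, (j < n)%nat -> exists i, (i < m)%nat /\ A i j <> None)
  (hArow : forall i, (i < m)%nat -> exists j, (j < n)%nat /\ A i j <> None) :
  let F := fun x : vec => tadj m A (tmul q B (rmul n P x)) in
  let Fstar := fun y : vec => tadj q (ttr B) (rmul n P (tmul m (ttr A) y)) in
  cw_upper m Fstar = ER_opp (cw_lower n F).
Proof.
  intros F Fstar. destruct hP as [hP0 hP1].
  assert (finB : forall v : nat -> R, forall i, (i < m)%nat ->
     tmul q B (fun k => Fin (v k)) i = Fin (fin (tmul q B (fun k => Fin (v k)) i))).
  { intros v i Hi. destruct (hB i Hi) as [k [Hk Hbk]].
    destruct (B i k) as [b|] eqn:E; [|congruence].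
    apply (fin_of_lo (b + v k)).
    - unfold tmul. apply bigmax_notP. intros l _. destruct (B i l); simpl; discriminate.
    - unfold tmul. apply le_bigmax. exists k. split; auto. rewrite E. simpl. lra. }
  assert (finA : forall v : nat -> R, forall j, (j < n)%nat ->
     tmul m (ttr A) (fun k => Fin (v k)) j = Fin (fin (tmul m (ttr A) (fun k => Fin (v k)) j))).
  { intros v j Hj. destruct (hAcol j Hj) as [i [Hi Ha]].
    destruct (A i j) as [a|] eqn:E; [|congruence].
    apply (fin_of_lo (a + v i)).
    - unfold tmul. apply bigmax_notP. intros l _. unfold ttr. destruct (A l j); simpl; discriminate.
    - unfold tmul. apply le_bigmax. exists i. split; auto. unfold ttr. rewrite E. simpl. lra. }
  assert (rmulF : forall z : nat -> R, rmul n P (fun l => Fin (z l)) = fun k => Fin (Rbigsum n (fun l => P k l * z l))).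
  { intros z. apply functional_extensionality. intros k. apply rmul_fin. auto. }
  unfold cw_upper, cw_lower, ER_inf. f_equal. f_equal.
  apply functional_extensionality. intros x. apply propositional_extensionality. split.
  -
    intros [w Hw].
    set (xr := fun j => fin (tmul m (ttr A) (fun k => Fin (w k)) j)).
    exists (fun j => - xr j). intros j Hj. unfold F. rewrite rmulF.
    unfold tadj. apply le_bigmin. intros i Hi.
    destruct (A i j) as [a|] eqn:EA; simpl; [|exact I].
    assert (Haw : a + w i <= xr j).
    { assert (H := finA w j Hj). fold (xr j) in H.
      assert (H2 : ER_le (tmul m (ttr A) (fun k => Fin (w k)) j) (Fin (xr j))) by (rewrite H; simpl; lra).
      unfold tmul in H2. rewrite bigmax_le in H2. specialize (H2 i Hi). unfold ttr in H2. rewrite EA in H2. simpl in H2. lra. }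
    specialize (Hw i Hi). unfold Fstar in Hw. unfold tadj in Hw. apply bigmin_le in Hw.
    destruct Hw as [k [Hk Hw]]. unfold ttr in Hw.
    rewrite (rmul_fin n P _ xr) in Hw by (intros l Hl; apply finA; auto).
    destruct (B i k) as [b|] eqn:EB; simpl in Hw; [|contradiction].
    assert (Hy : ER_le (Fin (b + Rbigsum n (fun l => P k l * - xr l))) (tmul q B (fun k0 => Fin (Rbigsum n (fun l => P k0 l * - xr l))) i)).
    { unfold tmul. apply le_bigmax. exists k. split; auto. rewrite EB. simpl. lra. }
    rewrite Rbigsum_opp in Hy.
    destruct (tmul q B _ i); simpl in *; auto. lra.
  -
    intros [z Hz].
    set (yr := fun i => fin (tmul q B (fun k => Fin (Rbigsum n (fun l => P k l * z l))) i)).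
    exists (fun i => - yr i). intros i Hi. unfold Fstar.
    set (xr := fun j => fin (tmul m (ttr A) (fun k => Fin (- yr k)) j)).
    assert (Hx : forall j, (j < n)%nat -> xr j <= - x - z j).
    { intros j Hj. specialize (Hz j Hj). unfold F in Hz. rewrite rmulF in Hz.
      unfold tadj in Hz. rewrite le_bigmin in Hz.
      assert (H := finA (fun k => - yr k) j Hj). fold (xr j) in H.
      assert (H2 : ER_le (tmul m (ttr A) (fun k => Fin (- yr k)) j) (Fin (- x - z j))).
      { unfold tmul. apply bigmax_le. intros i' Hi'. specialize (Hz i' Hi').
        unfold ttr. rewrite (finB _ i' Hi') in Hz. fold (yr i') in Hz.
        destruct (A i' j); simpl in *; auto. lra. }
      rewrite H in H2. simpl in H2. exact H2. }
    unfold tadj. apply bigmin_le.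
    assert (Hy := finB (fun k => Rbigsum n (fun l => P k l * z l)) i Hi). fold (yr i) in Hy.
    assert (Hy2 : ER_le (Fin (yr i)) (tmul q B (fun k => Fin (Rbigsum n (fun l => P k l * z l))) i)) by (rewrite Hy; simpl; apply Rle_refl).
    unfold tmul in Hy2. apply le_bigmax in Hy2. destruct Hy2 as [k [Hk Hk2]].
    exists k. split; auto. unfold ttr.
    rewrite (rmul_fin n P _ xr) by (intros l Hl; apply finA; auto).
    destruct (B i k) as [b|] eqn:EB; simpl in *; [|contradiction].
    assert (S : Rbigsum n (fun l => P k l * xr l) <= Rbigsum n (fun l => P k l * (- x - z l))).
    { apply Rbigsum_le. intros l Hl. apply Rmult_le_compat_l; [apply hP0; auto|]. apply Hx; auto. }
    rewrite Rbigsum_aff, hP1 in S by auto. lra.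
Qed.
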